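(* Let $A\in GL(4,\mathbb{R})$ satisfy condition (E) (defined in the context). \begin{enumerate} \item If the matrix $A^2$ also satisfies condition (E), then $(\det A)^2=1$. \item If $(\det A)^2=1$, then there exists $k\in S^1$ such that $A$ is $k$-congruent; moreover, either such a $k$ is unique, or $A$ is $k$-congruent for every $k\in S^1$. \end{enumerate} Furthermore, let $A_1,A_2\in GL(4,\mathbb{R})$ be $k_1$-congruent and $k_2$-congruent respectively, with $k_1,k_2\in S^1$, and suppose $k_1$ is uniquely determined (i.e. $A_1$ is $k$-congruent only for $k=k_1$). If $A_1A_2$ (resp. $A_2A_1$) is $k$-congruent for some $k\in S^1$, then $A_1A_2$ (resp. $A_2A_1$) is $k_1$-congruent.
   Context: For $A\in GL(4,\mathbb{R})$ write in block form $A=\begin{pmatrix} a_{00} & \mathbf{a_h}\\ \mathbf{a_v}^t & \hat A\end{pmatrix}$, $A^{-1}=\begin{pmatrix} \tilde a_{00} & \mathbf{\tilde a_h}\\ \mathbf{\tilde a_v}^t & \tilde A\end{pmatrix}$, with $a_{00},\tilde a_{00}\in\mathbb{R}$, $\mathbf{a_h},\mathbf{a_v},\mathbf{\tilde a_h},\mathbf{\tilde a_v}\in\mathbb{R}^3$ (row vectors) and $\hat A,\tilde A$ $3\times3$ matrices. Condition (E) on $A$ means: $\tilde a_{00}=a_{00}$ and $\tilde A=\hat A^t$. Let $S^1=\mathbb{R}\cup\{\omega\}$ (the extended real line with $+\infty$ and $-\infty$ identified to one point $\omega$). For $k\in\mathbb{R}$ let $I^{(k)}=\mathrm{diag}(k,1,1,1)$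 and $O^{(k)}(4,\mathbb{R})=\{A\in GL(4,\mathbb{R}) : (\det A)^2=1,\ A^tI^{(k)}A=I^{(k)}\}$; and $O^{(\omega)}(4,\mathbb{R})=\{A\in GL(4,\mathbb{R}) : A^t\in O^{(0)}(4,\mathbb{R})\}$. A matrix $A$ is called $k$-congruent if $A\in O^{(k)}(4,\mathbb{R})$. *)

(* Defs.v *)
From HB Require Import structures.
From mathcomp Require Import all_boot all_order all_algebra.
From mathcomp Require Import reals.
Set Implicit Arguments. Unset Strict Implicit. Unset Printing Implicit Defensive.
Import Order.TTheory GRing.Theory Num.Theory.
Local Open Scope ring_scope.

(* Indices 0..3; index 0 is the distinguished one, 1..3 are lift ord0 i. *)

Definition hatblock (R : realType) (A : 'M[R]_4) : 'M[R]_3 :=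
  \matrix_(i < 3, j < 3) A (lift ord0 i) (lift ord0 j).

(* Condition (E): tilde a_00 = a_00 and tilde A = (hat A)^T, where tilde
   denotes the corresponding block of A^{-1}. *)
Definition condE (R : realType) (A : 'M[R]_4) : Prop :=
  (invmx A) ord0 ord0 = A ord0 ord0 /\ hatblock (invmx A) = (hatblock A)^T.

(* S^1 = R u {omega}: Some k is the real k, None is the point omega. *)
Definition S1 (R : realType) := option R.

Definition Ik (R : realType) (k : R) : 'M[R]_4 :=
  diag_mx (\row_(i < 4) (if i == ord0 then k else 1)).

Definition in_Ok (R : realType) (k : R) (A : 'M[R]_4) : Prop :=
  A \in unitmx /\ (\det A) ^+ 2 = 1 /\ A^T *m Ik k *m A = Ik k.

Definition kcongruent (R : realType) (k : S1 R) (A : 'M[R]_4) : Prop :=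
  match k with
  | Some r => in_Ok r A
  | None => A \in unitmx /\ in_Ok 0 A^T
  end.

(* Main.v *)
Require Import Defs.
From HB Require Import structures.
From mathcomp Require Import all_boot all_order all_algebra.
From mathcomp Require Import reals.
From mathcomp Require Import ring lra.
Set Implicit Arguments. Unset Strict Implicit. Unset Printing Implicit Defensive.
Import Order.TTheory GRing.Theory Num.Theory.
Local Open Scope ring_scope.

Section S.
Variable R : realType.
Notation M4 := 'M[R]_(1+3).

Lemma IkE (r : R) : (Ik r : M4) = block_mx r%:M 0 0 1%:M.
Proof.
apply/matrixP => i j.
case: (split_ordP i) => i' ->; case: (split_ordP j) => j' ->;
  rewrite ?block_mxEul ?block_mxEur ?block_mxEdl ?block_mxEdr /Ik !mxE.
- by rewrite (ord1 i') (ord1 j').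
- by rewrite -[lshift 3 i' == _]val_eqE /= (ord1 i') mulr0n.
- by rewrite -[rshift 1 i' == _]val_eqE /= (ord1 j') mulr0n.
- rewrite -[rshift 1 i' == _]val_eqE -[rshift 1 i' == _]val_eqE /= eqn_add2l.
  by [].
Qed.

Definition Q (r : R) : M4 := block_mx r%:M 0 0 1%:M.
Definition E1 : M4 := block_mx 1%:M 0 0 0.

Lemma QE r s : Q s = Q r + (s - r) *: E1.
Proof.
rewrite /Q /E1 scale_block_mx add_block_mx !scaler0 !addr0 scalemx1.
by rewrite -raddfD /= addrC subrK.
Qed.

Lemma kSE (r : R) (A : M4) :
  kcongruent (Some r) A <-> [/\ A \in unitmx, \det A ^+ 2 = 1 & A^T *m Q r *m A = Q r].
Proof.
rewrite /= /in_Ok IkE /Q; split; first by case=> ? [? ?].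
by case=> ? ? ?.
Qed.

Lemma kNE (A : M4) :
  kcongruent None A <-> [/\ A \in unitmx, \det A ^+ 2 = 1 & A *m Q 0 *m A^T = Q 0].
Proof.
rewrite /= /in_Ok IkE /Q trmxK unitmx_tr det_tr.
by split; [case=> ? [? [? ?]] | case=> ? ? ?].
Qed.

Lemma rv0 (p : 'rV[R]_3) : p^T *m p = 0 -> p = 0.
Proof.
move=> H; apply/matrixP => i j; rewrite (ord1 i) mxE.
have := congr1 (fun M : 'M[R]_3 => M j j) H; rewrite !mxE big_ord1 !mxE => /eqP.
by rewrite mulf_eq0 orbb => /eqP.
Qed.

Lemma rv0' (p : 'rV[R]_3) : p *m p^T = 0 -> p = 0.
Proof.
move=> H; apply/matrixP => i j; rewrite (ord1 i) mxE.
have := congr1 (fun M : 'M[R]_1 => M 0 0) H; rewrite !mxE => H2.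
have Hp : forall k, true -> 0 <= p 0 k * (p^T) k 0.
  by move=> k _; rewrite mxE -expr2 sqr_ge0.
have := psumr_eq0P Hp H2 (i := j) isT.
by rewrite mxE => /eqP; rewrite mulf_eq0 orbb => /eqP.
Qed.


Lemma cv0 (w : 'cV[R]_3) : w^T *m w = 0 -> w = 0.
Proof. by move=> H; rewrite -[w]trmxK (@rv0' w^T) ?trmx0 // trmxK. Qed.

Lemma cv0' (w : 'cV[R]_3) : w *m w^T = 0 -> w = 0.
Proof. by move=> H; rewrite -[w]trmxK (@rv0 w^T) ?trmx0 // trmxK. Qed.

Ltac bsimp := rewrite ?tr_block_mx ?mulmx_block ?trmx0 ?mulmx0 ?mul0mx ?addr0 ?add0r ?mulmx1 ?mul1mx ?tr_scalar_mx;
  rewrite ?mulmx0 ?mul0mx ?addr0 ?add0r ?mulmx1 ?mul1mx.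

Lemma det2_unit (A : M4) : \det A ^+ 2 = 1 -> A \in unitmx.
Proof.
move=> H; rewrite unitmxE unitfE; apply/eqP => H0.
by move: H; rewrite H0 expr0n /= => /eqP; rewrite eq_sym oner_eq0.
Qed.

Lemma orth_sym (H : 'M[R]_3) : H^T *m H = 1%:M -> H *m H^T = 1%:M.
Proof. exact: mulmx1C. Qed.

Lemma orth_det (H : 'M[R]_3) : H^T *m H = 1%:M -> \det H ^+ 2 = 1.
Proof. by move=> h; rewrite expr2 -{1}det_tr -det_mulmx h det1. Qed.

Lemma BD (a : 'M[R]_1) (H : 'M[R]_3) :
  \det (block_mx a 0 0 H : M4) ^+ 2 = 1 -> H^T *m H = 1%:M ->
  forall k, kcongruent k (block_mx a 0 0 H : M4).
Proof.
move=> hd hH k.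
have ha : a 0 0 ^+ 2 = 1.
  by move: hd; rewrite det_ublock exprMn orth_det // mulr1 det_mx11.
rewrite [a]mx11_scalar in hd * ; case: k => [r|].
- apply/kSE; split => //; first exact: det2_unit.
  rewrite /Q; bsimp; rewrite hH -!scalar_mxM.
  by rewrite mulrC mulrA -expr2 ha mul1r.
- apply/kNE; split => //; first exact: det2_unit.
  rewrite /Q; bsimp; rewrite orth_sym // -!scalar_mxM.
  by rewrite mulr0 mul0r.
Qed.

Lemma RZ (c : 'M[R]_1) (q : 'cV[R]_3) (H : 'M[R]_3) r :
  kcongruent (Some r) (block_mx c 0 q H : M4) ->
  forall k, kcongruent k (block_mx c 0 q H : M4).
Proof.
move/kSE => [hu hd]; rewrite /Q; bsimp.
case/eq_block_mx => _ _ hq hH.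
have q0 : q = 0.
  by rewrite -[q]mul1mx -(orth_sym hH) -mulmxA hq mulmx0.
by move: hd; rewrite q0 => hd; apply: BD.
Qed.

Lemma kmul k (A B : M4) : kcongruent k A -> kcongruent k B -> kcongruent k (A *m B).
Proof.
case: k => [r|].
- move=> /kSE [uA dA hA] /kSE [uB dB hB]; apply/kSE; split.
  + by rewrite unitmx_mul uA uB.
  + by rewrite det_mulmx exprMn dA dB mulr1.
  + have -> : (A *m B)^T *m Q r *m (A *m B) = B^T *m (A^T *m Q r *m A) *m B.
      by rewrite trmx_mul !mulmxA.
    by rewrite hA.
- move=> /kNE [uA dA hA] /kNE [uB dB hB]; apply/kNE; split.
  + by rewrite unitmx_mul uA uB.
  + by rewrite det_mulmx exprMn dA dB mulr1.
  + have -> : (A *m B) *m Q 0 *m (A *m B)^T = A *m (B *m Q 0 *m B^T) *m A^T.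
      by rewrite trmx_mul !mulmxA.
    by rewrite hB.
Qed.

Lemma kinv k (A : M4) : kcongruent k A -> kcongruent k (invmx A).
Proof.
case: k => [r|].
- move=> /kSE [uA dA hA]; apply/kSE; split.
  + by rewrite unitmx_inv.
  + by rewrite det_inv exprVn dA invr1.
  + rewrite -[in LHS]hA !mulmxA -trmx_mul mulmxV // trmx1 mul1mx.
    by rewrite -mulmxA mulmxV // mulmx1.
- move=> /kNE [uA dA hA]; apply/kNE; split.
  + by rewrite unitmx_inv.
  + by rewrite det_inv exprVn dA invr1.
  + rewrite -[in LHS]hA !mulmxA mulVmx // mul1mx.
    by rewrite -mulmxA -trmx_mul mulVmx // trmx1 mulmx1.
Qed.

Definition dual (k : option R) : option R :=
  match k with None => Some 0 | Some r => if r == 0 then None else Some r^-1 end.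

Lemma dualK k : dual (dual k) = k.
Proof.
case: k => [r|] /=; last by rewrite eqxx.
case: eqP => [->|h] //=.
by rewrite invr_eq0; case: eqP => // _; rewrite invrK.
Qed.

Lemma QQV r : r != 0 -> Q r *m Q r^-1 = 1%:M.
Proof.
move=> h; rewrite /Q; bsimp; rewrite -scalar_mxM mulfV //.
by rewrite -scalar_mx_block.
Qed.

Lemma QVQ r : r != 0 -> Q r^-1 *m Q r = 1%:M.
Proof. by move=> h; apply: mulmx1C; apply: QQV. Qed.

Lemma kcong_tr k (A : M4) : kcongruent k A -> kcongruent (dual k) A^T.
Proof.
case: k => [r|] /=.
- case: eqP => [->|hr].
  + move=> h; apply/kNE; move/kSE: h => [u d h].
    by rewrite trmxK unitmx_tr det_tr.
  + move/eqP: hr => hr.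
    move/kSE => [u d h]; apply/kSE; split; rewrite ?unitmx_tr ?det_tr // trmxK.
    have h1 : (A^T *m Q r) *m (A *m Q r^-1) = 1%:M.
      by rewrite mulmxA h QQV.
    have h2 := mulmx1C h1.
    rewrite -[LHS]mulmx1 -(QQV hr) !mulmxA.
    by rewrite mulmxA in h2; rewrite h2 mul1mx.
- by case.
Qed.

Lemma kcong_trE k (A : M4) : kcongruent k A^T <-> kcongruent (dual k) A.
Proof.
split => h; first by rewrite -[A]trmxK; apply: kcong_tr.
by rewrite -[k]dualK; apply: kcong_tr.
Qed.

Lemma sc0 n : ((0 : R)%:M : 'M_n) = 0.
Proof. by rewrite raddf0. Qed.

Lemma blockP (P : M4 -> Prop) :
  (forall a x y M, P (block_mx a x y M)) -> forall A : M4, P A.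
Proof. by move=> h A; rewrite -[A]submxK; apply: h. Qed.

Lemma O0S (a : 'M[R]_1) v w (G : 'M[R]_3) :
  kcongruent (Some 0) (block_mx a v w G : M4) -> w = 0 /\ G^T *m G = 1%:M.
Proof.
move/kSE => [_ _]; rewrite /Q sc0; bsimp.
by case/eq_block_mx => /cv0 -> _ _ ->.
Qed.

Lemma OwS (a : 'M[R]_1) v w (G : 'M[R]_3) :
  kcongruent None (block_mx a v w G : M4) -> v = 0 /\ G^T *m G = 1%:M.
Proof.
move/kNE => [_ _]; rewrite /Q sc0; bsimp.
by case/eq_block_mx => /rv0' -> _ _ /mulmx1C ->.
Qed.

Lemma TLs r s (A : M4) : r != s -> kcongruent (Some r) A -> kcongruent (Some s) A ->
  forall k, kcongruent k A.
Proof.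
move=> rs hr hs; move: (hr) (hs) => /kSE [_ _ h1] /kSE [_ _ h2].
have hE : A^T *m E1 *m A = E1.
  have : (s - r) *: (A^T *m E1 *m A) = (s - r) *: E1.
    apply: (@addrI _ (Q r)); rewrite -QE -h2 (QE r s) mulmxDr mulmxDl h1.
    by rewrite -scalemxAr -scalemxAl.
  by move/scalerI; apply; rewrite subr_eq0 eq_sym.
clear hs h1 h2; move: hE hr; elim/blockP: A => a x y M; rewrite /E1; bsimp.
case/eq_block_mx => _ _ _ /rv0 ->; exact: RZ.
Qed.

Lemma TL j l (A : M4) : j != l -> kcongruent j A -> kcongruent l A ->
  forall k, kcongruent k A.
Proof.
have aux : forall r, kcongruent (Some r) A -> kcongruent None A -> forall k, kcongruent k A.
  move=> r; elim/blockP: A => a x y M hS /OwS [x0 _]; move: hS; rewrite x0; exact: RZ.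
case: j => [r|]; case: l => [s|] //.
- by move=> h; apply: TLs; apply: contra h => /eqP ->.
- by move=> _; apply: aux.
- by move=> _ h1 h2; apply: aux h2 h1.
Qed.

Lemma par (u : 'cV[R]_3) (v : 'rV[R]_3) : u != 0 -> (u *m v)^T = u *m v ->
  exists l : R, v = l *: u^T.
Proof.
move=> u0 h; rewrite trmx_mul in h.
have := congr1 (mulmx^~ u) h; rewrite /= -!mulmxA.
rewrite [u^T *m u]mx11_scalar [v *m u]mx11_scalar !mul_mx_scalar.
set n := (u^T *m u) 0 0; set s := (v *m u) 0 0 => h2.
have n0 : n != 0.
  apply: contra u0 => /eqP n0; apply/eqP/cv0.
  by rewrite [u^T *m u]mx11_scalar -/n n0 sc0.
exists (s / n); rewrite -[v]trmxK.
have -> : v^T = (s / n) *: u by rewrite mulrC -scalerA -h2 scalerA mulVf // scale1r.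
by rewrite linearZ.
Qed.

Lemma DETid (a : 'M[R]_1) (x : 'rV[R]_3) (y : 'cV[R]_3) (M : 'M[R]_3) (l m : R) :
  let A := (block_mx a x y M : M4) in
  let B := (block_mx a (l *: y^T) (m *: x^T) M^T : M4) in
  B *m A = 1%:M ->
  A^T *m Q m *m A = Q m + block_mx ((1 - m * l) *: (y^T *m y)) ((1 - m * l) *: (y^T *m M)) 0 0.
Proof.
move=> A B hBA.
have hC : A^T *m Q m = Q m *m B + block_mx 0 ((1 - m * l) *: y^T) 0 0.
  rewrite /A /B /Q; bsimp; rewrite add_block_mx !addr0.
  rewrite [m%:M *m (_ *: _)]mul_scalar_mx scalerA -scalerDl addrC subrK scale1r.
  by rewrite [x^T *m _]mul_mx_scalar [a]mx11_scalar tr_scalar_mx scalar_mxC.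
rewrite hC mulmxDl -mulmxA hBA mulmx1; congr (_ + _).
by rewrite /A; bsimp; rewrite -!scalemxAl.
Qed.

Lemma detQ m : \det (Q m) = m.
Proof. by rewrite /Q det_ublock det1 mulr1 det_mx11 mxE eqxx mulr1n. Qed.

Lemma detQplus m (s : 'M[R]_1) (w : 'rV[R]_3) :
  \det (Q m + block_mx s w 0 0) = m + s 0 0.
Proof.
by rewrite /Q add_block_mx !addr0 add0r det_ublock det1 mulr1 det_mx11 !mxE eqxx mulr1n.
Qed.

Lemma blk_inv a x y M x' y' :
  (block_mx a x y M : M4) *m block_mx a x' y' M^T = 1%:M ->
  [/\ a *m a + x *m y' = 1%:M, a *m x' + x *m M^T = 0,
      y *m a + M *m y' = 0 & y *m x' + M *m M^T = 1%:M].
Proof. by bsimp; rewrite [1%:M in X in _ = X -> _]scalar_mx_block => /eq_block_mx. Qed.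

Lemma blk_inv' a x y M x' y' :
  (block_mx a x' y' M^T : M4) *m block_mx a x y M = 1%:M ->
  [/\ a *m a + x' *m y = 1%:M, a *m x + x' *m M = 0,
      y' *m a + M^T *m y = 0 & y' *m x + M^T *m M = 1%:M].
Proof. by bsimp; rewrite [1%:M in X in _ = X -> _]scalar_mx_block => /eq_block_mx. Qed.

Lemma sym1 (N : 'M[R]_3) (u : 'cV[R]_3) (v : 'rV[R]_3) :
  u *m v + N *m N^T = 1%:M -> (u *m v)^T = u *m v.
Proof.
move=> h; have -> : u *m v = 1%:M - N *m N^T by rewrite -h addrK.
by rewrite linearB /= trmx1 trmx_mul trmxK.
Qed.

Lemma parallels a x y M x' y' :
  (block_mx a x y M : M4) *m block_mx a x' y' M^T = 1%:M ->
  (block_mx a x' y' M^T : M4) *m block_mx a x y M = 1%:M ->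
  x != 0 -> y != 0 -> exists l m, x' = l *: y^T /\ y' = m *: x^T.
Proof.
move=> hAB hBA x0 y0.
case/blk_inv: hAB => _ _ _ h4; case/blk_inv': hBA => _ _ _ h4'.
have [l hl] := par y0 (sym1 h4).
have x0' : x^T != 0 by apply: contra x0 => /eqP h; rewrite -[x]trmxK h trmx0.
have s' : (x^T *m y'^T)^T = x^T *m y'^T.
  rewrite -trmx_mul trmxK; apply/esym; apply: (sym1 (N := M^T)).
  by rewrite trmxK.
have [m hm] := par x0' s'.
exists l, m; split => //; by rewrite -[y']trmxK hm linearZ /= trmxK.
Qed.

Lemma nz_norm (y : 'cV[R]_3) : y != 0 -> (y^T *m y) 0 0 != 0.
Proof.
move=> y0; apply: contra y0 => /eqP h; apply/eqP/cv0.
by rewrite [y^T *m y]mx11_scalar h sc0.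
Qed.

Lemma P2b a x y M x' y' :
  (block_mx a x y M : M4) *m block_mx a x' y' M^T = 1%:M ->
  (block_mx a x' y' M^T : M4) *m block_mx a x y M = 1%:M ->
  \det (block_mx a x y M : M4) ^+ 2 = 1 ->
  exists k, kcongruent k (block_mx a x y M : M4).
Proof.
move=> hAB hBA hd.
have hu := det2_unit hd.
have [x0|x0] := eqVneq x 0.
  exists None; apply/kNE; split => //.
  case/blk_inv': (hBA) => _ _ _; rewrite ?x0 mulmx0 add0r => /mulmx1C h.
  by rewrite ?x0 /Q sc0; bsimp; rewrite h.
have [y0|y0] := eqVneq y 0.
  exists (Some 0); apply/kSE; split => //.
  case/blk_inv: (hAB) => _ _ _; rewrite ?y0 mul0mx add0r => /mulmx1C h.
  by rewrite ?y0 /Q sc0; bsimp; rewrite h.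
have [l [m [hl hm]]] := parallels hAB hBA x0 y0.
rewrite hl hm in hBA.
have hid := DETid hBA.
have hml : 1 - m * l = 0.
  move: (congr1 (@determinant _ _) hid).
  rewrite detQplus !det_mulmx det_tr detQ mulrC mulrA -expr2 hd mul1r mxE.
  move/(canLR (addKr m)); rewrite addNr => /esym/eqP.
  by rewrite mulf_eq0 (negbTE (nz_norm y0)) orbF => /eqP.
exists (Some m); apply/kSE; split => //.
by rewrite hid hml !scale0r block_mx0 addr0.
Qed.

Lemma nz_normr (x : 'rV[R]_3) : x != 0 -> (x *m x^T) 0 0 != 0.
Proof.
move=> x0; apply: contra x0 => /eqP h; apply/eqP/rv0'.
by rewrite [x *m x^T]mx11_scalar h sc0.
Qed.

Lemma P1b a x y M x' y' :
  (block_mx a x y M : M4) *m block_mx a x' y' M^T = 1%:M ->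
  (block_mx a x' y' M^T : M4) *m block_mx a x y M = 1%:M ->
  drsubmx ((block_mx a x' y' M^T : M4) *m block_mx a x' y' M^T) =
    (drsubmx ((block_mx a x y M : M4) *m block_mx a x y M))^T ->
  \det (block_mx a x y M : M4) ^+ 2 = 1.
Proof.
move=> hAB hBA hsq.
have [x0|x0] := eqVneq x 0.
  case/blk_inv': (hBA) => _ _ _; rewrite ?x0 mulmx0 add0r => /orth_det hM.
  case/blk_inv: (hAB) => + _ _ _; rewrite ?x0 mul0mx addr0 => ha.
  rewrite det_lblock exprMn hM mulr1 expr2 -det_mulmx ha det1 //.
have [y0|y0] := eqVneq y 0.
  case/blk_inv: (hAB) => _ _ _; rewrite ?y0 mul0mx add0r => /mulmx1C /orth_det.
  move=> hM.
  case/blk_inv': (hBA) => + _ _ _; rewrite ?y0 mulmx0 addr0 => ha.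
  by rewrite det_ublock exprMn hM mulr1 expr2 -det_mulmx ha det1.
have [l [m [hl hm]]] := parallels hAB hBA x0 y0.
rewrite hl hm in hBA hsq.
move: hsq; rewrite !mulmx_block !block_mxKdr linearD /= !trmx_mul => /addIr.
rewrite -scalemxAl -scalemxAr scalerA => h.
have hml : m * l = 1.
  have := congr1 (fun N => (x *m N *m y) 0 0) h.
  rewrite /= -scalemxAr -scalemxAl !mulmxA -[x *m x^T *m y^T *m y]mulmxA.
  rewrite [x *m x^T]mx11_scalar [y^T *m y]mx11_scalar.
  have := nz_normr x0; have := nz_norm y0.
  set n1 := (x *m x^T) 0 0; set n2 := (y^T *m y) 0 0 => n20 n10.
  rewrite -scalar_mxM !mxE eqxx mulr1n => e.
  have n12 : n1 * n2 != 0 by rewrite mulf_eq0 negb_or n10 n20.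
  apply/eqP; rewrite -subr_eq0; apply/eqP; apply: (mulIf n12).
  by rewrite mulrBl mul1r e subrr mul0r.
have hid := DETid hBA.
move: (congr1 (@determinant _ _) hid).
rewrite detQplus !det_mulmx det_tr detQ hml subrr scale0r mxE addr0.
have m0 : m != 0 by apply/eqP => m0; move: hml; rewrite m0 mul0r => /eqP; rewrite eq_sym oner_eq0.
by rewrite mulrC mulrA -expr2 => /eqP; rewrite -{2}[m]mul1r (inj_eq (mulIf m0)) => /eqP.
Qed.

Lemma rankR (al be ga c c2 p p2 : R) : al != 0 -> ga != 0 ->
  al * c ^+ 2 + be * c2 ^+ 2 = ga -> al * c * p + be * c2 * p2 = 0 ->
  al * p ^+ 2 + be * p2 ^+ 2 = 0 -> p = 0.
Proof.
move=> ha hg h3 h1 h2.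
have id : al * ga * p ^+ 2 =
  (al * c * p + be * c2 * p2) * ((al * c * p + be * c2 * p2) - 2 * be * c2 * p2)
  + be * c2 ^+ 2 * (al * p ^+ 2 + be * p2 ^+ 2)
  - al * p ^+ 2 * (al * c ^+ 2 + be * c2 ^+ 2 - ga) by ring.
move: id; rewrite h1 h2 h3 subrr !(mulr0, mul0r, subr0, addr0) => /eqP.
by rewrite mulf_eq0 mulf_eq0 (negbTE ha) (negbTE hg) /= sqrf_eq0 => /eqP.
Qed.

Lemma XQX r s (X : M4) : X^T *m Q r *m X = Q r ->
  X^T *m Q s *m X = Q r + (s - r) *: (X^T *m E1 *m X).
Proof. by move=> h; rewrite (QE r s) mulmxDr mulmxDl h -scalemxAr -scalemxAl. Qed.

Lemma EXT s1 s3 al be (g M : M4) :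
  Q s1 + al *: (g^T *m E1 *m g) + be *: (M^T *m E1 *m M) = Q s3 ->
  al != 0 -> s3 - s1 != 0 -> ursubmx g = 0.
Proof.
elim/blockP: g => c p q H; elim/blockP: M => c2 p2 q2 H2.
rewrite /Q /E1; bsimp; rewrite !scale_block_mx !add_block_mx block_mxKur.
case/eq_block_mx => hul hur _ hdr ha hg.
apply/matrixP => i j; rewrite (ord1 i) [RHS]mxE.
have e1 := congr1 (fun N : 'M[R]_1 => N 0 0) hul.
have e2 := congr1 (fun N : 'M[R]_(1,3) => N 0 j) hur.
have e3 := congr1 (fun N : 'M[R]_3 => N j j) hdr.
move: e1 e2 e3; rewrite /= !mxE !big_ord1 !mxE !eqxx !mulr1n add0r.
move=> e1 e2 e3.
apply: (@rankR al be (s3 - s1) (c 0 0) (c2 0 0) _ (p2 0 j)) => //.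
- by rewrite -e1; ring.
- by rewrite -e2; ring.
- have e4 : al * (p 0 j * p 0 j) + be * (p2 0 j * p2 0 j) = 0.
    by apply: (@addrI _ 1); rewrite addr0 -[RHS]e3 addrA.
  by rewrite -e4; ring.
Qed.

Lemma ur0_all (g : M4) r : kcongruent (Some r) g -> ursubmx g = 0 -> forall j, kcongruent j g.
Proof.
move=> hg h0; rewrite -[g]submxK h0; apply: (@RZ _ _ _ r).
by rewrite -h0 submxK.
Qed.

Lemma CoreRa (k1 k k2 : R) (g M N : M4) : k != k1 -> k2 != k1 -> k != k2 ->
  kcongruent (Some k1) g -> kcongruent (Some k) M -> kcongruent (Some k2) N ->
  g = M *m N -> forall j, kcongruent j g.
Proof.
move=> d1 d2 d3 hg hM hN e.
move: (hg) (hM) (hN) => /kSE [ug _ Hg] /kSE [uM _ HM] /kSE [uN _ HN].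
have e2 : g^T *m Q k *m g = N^T *m Q k *m N.
  have hM' : M = g *m invmx N by rewrite e mulmxK.
  rewrite hM' trmx_mul in HM.
  rewrite -[Q k in RHS]HM !mulmxA -[N^T *m (invmx N)^T]trmx_mul mulVmx // trmx1 mul1mx.
  by rewrite -[_ *m invmx N *m N]mulmxA mulVmx // mulmx1.
rewrite (XQX k Hg) (XQX k HN) in e2.
apply: (ur0_all hg); apply: (@EXT k1 k2 (k - k1) (- (k - k2)) g N).
- by rewrite e2 scaleNr addrK.
- by rewrite subr_eq0.
- by rewrite subr_eq0.
Qed.

Lemma CoreRb (k1 k k2 : R) (g M N : M4) : k != k1 -> k2 != k1 -> k != k2 ->
  kcongruent (Some k1) g -> kcongruent (Some k) M -> kcongruent (Some k2) N ->
  g = N *m M -> forall j, kcongruent j g.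
Proof.
move=> d1 d2 d3 hg hM hN e.
have hN' := kinv hN.
move: (hg) (hM) (hN') => /kSE [ug _ Hg] /kSE [uM _ HM] /kSE [uN _ HN].
have uN0 : N \in unitmx by rewrite -unitmx_inv.
have hM' : M = invmx N *m g by rewrite e mulKmx.
have e2 : Q k1 + (k2 - k1) *: (g^T *m E1 *m g) + (k - k2) *: (M^T *m E1 *m M) = Q k.
  rewrite -[RHS]HM -(XQX k2 Hg) hM' trmx_mul.
  have -> : g^T *m (invmx N)^T *m Q k *m (invmx N *m g) =
            g^T *m ((invmx N)^T *m Q k *m invmx N) *m g by rewrite !mulmxA.
  rewrite (XQX k HN) mulmxDr mulmxDl -scalemxAr -scalemxAl; congr (_ + _).
  by congr (_ *: _); rewrite !mulmxA.
apply: (ur0_all hg); apply: (EXT e2).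
- by rewrite subr_eq0.
- by rewrite subr_eq0.
Qed.

Lemma CE s (X A B : M4) : X^T *m Q s *m X = Q s -> X = A *m B -> B \in unitmx ->
  A^T *m Q s *m A = (invmx B)^T *m Q s *m invmx B.
Proof.
move=> h e u; rewrite -[Q s in RHS]h e trmx_mul !mulmxA.
rewrite -[(invmx B)^T *m B^T]trmx_mul mulmxV // trmx1 mul1mx.
by rewrite -[_ *m B *m invmx B]mulmxA mulmxV // mulmx1.
Qed.

Lemma CE' s (Z A B : M4) : Z *m Q s *m Z^T = Q s -> Z = A *m B -> A \in unitmx ->
  B *m Q s *m B^T = invmx A *m Q s *m (invmx A)^T.
Proof.
move=> h e u; rewrite -[Q s in RHS]h e trmx_mul !mulmxA mulVmx // mul1mx.
by rewrite -[_ *m A^T *m (invmx A)^T]mulmxA -trmx_mul mulVmx // trmx1 mulmx1.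
Qed.

Lemma S1aux r (Y X : M4) : r != 0 -> kcongruent None Y -> kcongruent (Some 0) X ->
  Y^T *m Q r *m Y = X^T *m Q r *m X -> ursubmx X = 0.
Proof.
move=> r0; elim/blockP: Y => b v w G; elim/blockP: X => a v' w' G'.
move=> /OwS [-> hG] /O0S [-> hG']; rewrite /Q; bsimp.
case/eq_block_mx => _ _ _; rewrite block_mxKur hG hG' -{1}[1%:M]add0r => /addIr.
move/esym/eqP; rewrite mul_mx_scalar -scalemxAl scaler_eq0 (negbTE r0) /=.
by move/eqP/rv0.
Qed.

Lemma S2aux r (g Y : M4) : r != 0 -> kcongruent None Y -> g^T *m Q r *m g = Q r ->
  g^T *m Q 0 *m g = Y^T *m Q 0 *m Y -> ursubmx g = 0.
Proof.
move=> r0; elim/blockP: g => c p q H; elim/blockP: Y => b v w G.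
move=> /OwS [-> hG]; rewrite /Q sc0; bsimp.
case/eq_block_mx => _ _ _ h1; case/eq_block_mx => _ _ _; rewrite block_mxKur.
rewrite hG => hH; move: h1; rewrite hH -{2}[1%:M]add0r => /addIr /eqP.
by rewrite mul_mx_scalar -scalemxAl scaler_eq0 (negbTE r0) /= => /eqP/rv0.
Qed.

Lemma S3aux s (g Y : M4) : s != 0 -> kcongruent (Some 0) g -> kcongruent None Y ->
  g *m Q s *m g^T = Y *m Q s *m Y^T -> dlsubmx Y = 0.
Proof.
move=> s0; elim/blockP: g => c p q H; elim/blockP: Y => b v w G.
move=> /O0S [-> hH] /OwS [-> hG]; rewrite /Q; bsimp.
case/eq_block_mx => _ _ _; rewrite block_mxKdl.
rewrite (orth_sym hH) (orth_sym hG) -{1}[1%:M]add0r => /addIr /esym /eqP.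
by rewrite mul_mx_scalar -scalemxAl scaler_eq0 (negbTE s0) /= => /eqP/cv0'.
Qed.

Lemma dl0_all (Y : M4) : kcongruent None Y -> dlsubmx Y = 0 -> forall j, kcongruent j Y.
Proof.
move=> hY h0 j; rewrite -[j]dualK; apply/kcong_trE.
apply: (@ur0_all _ 0); first by apply/kcong_trE; rewrite /= eqxx.
by rewrite -trmx_dlsub h0 trmx0.
Qed.


Lemma dualS r (Z : M4) : r != 0 -> kcongruent (Some r) Z -> Z *m Q r^-1 *m Z^T = Q r^-1.
Proof.
move=> r0 /kcong_tr; rewrite /= (negbTE r0) => /kSE [_ _]; by rewrite trmxK.
Qed.

Lemma kunit k (A : M4) : kcongruent k A -> A \in unitmx.
Proof. by case: k => [r /kSE [] | /kNE []]. Qed.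

Lemma SP1 r (g X Y : M4) : r != 0 -> kcongruent (Some r) g -> kcongruent (Some 0) X ->
  kcongruent None Y -> g = Y *m X -> kcongruent None g.
Proof.
move=> r0 hg hX hY e.
have uX := kunit hX; have hX' := kinv hX.
have eY : Y = g *m invmx X by rewrite e mulmxK.
move: (hg) => /kSE [_ _ Hg].
have h : Y^T *m Q r *m Y = (invmx X)^T *m Q r *m invmx X.
  by rewrite eY trmx_mul -[Q r in RHS]Hg !mulmxA.
have := S1aux r0 hY hX' h => /(ur0_all hX') /(_ None) /kinv; rewrite invmxK => hXw.
by rewrite e; apply: kmul.
Qed.

Lemma SP2 r (g X Y : M4) : r != 0 -> kcongruent (Some r) g -> kcongruent (Some 0) X ->
  kcongruent None Y -> g = X *m Y -> forall j, kcongruent j g.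
Proof.
move=> r0 hg hX hY e.
have uY := kunit hY.
have eX : X = g *m invmx Y by rewrite e mulmxK.
move: (hg) (hX) => /kSE [_ _ Hg] /kSE [_ _ HX].
have uY' : invmx Y \in unitmx by rewrite unitmx_inv.
have h := CE HX eX uY'; rewrite invmxK in h.
exact: (ur0_all hg (S2aux r0 hY Hg h)).
Qed.

Lemma SP3 r (g Y Z : M4) : r != 0 -> kcongruent (Some 0) g -> kcongruent None Y ->
  kcongruent (Some r) Z -> g = Y *m Z -> kcongruent (Some r) g.
Proof.
move=> r0 hg hY hZ e.
have uY := kunit hY.
have eZ : Z = invmx Y *m g by rewrite e mulKmx.
have uY' : invmx Y \in unitmx by rewrite unitmx_inv.
have h := CE' (dualS r0 hZ) eZ uY'; rewrite invmxK in h.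
have r0' : r^-1 != 0 by rewrite invr_eq0.
have := S3aux r0' hg hY h => /(dl0_all hY) /(_ (Some r)) hYr.
by rewrite e; apply: kmul.
Qed.

Lemma SP4 r (g Y Z : M4) : r != 0 -> kcongruent (Some 0) g -> kcongruent None Y ->
  kcongruent (Some r) Z -> g = Z *m Y -> kcongruent (Some r) g.
Proof.
move=> r0 hg hY hZ e.
have uY := kunit hY; have ug := kunit hg.
have eZ : Z = g *m invmx Y by rewrite e mulmxK.
have h := CE' (dualS r0 hZ) eZ ug.
have r0' : r^-1 != 0 by rewrite invr_eq0.
have := S3aux r0' (kinv hg) (kinv hY) (esym h) => /(dl0_all (kinv hY)) /(_ (Some r)) /kinv.
rewrite invmxK => hYr.
by rewrite e; apply: kmul.
Qed.

Definition CoreP (k1 k k2 : option R) := k != k1 -> k2 != k1 -> k != k2 ->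
  forall g M N : M4, kcongruent k1 g -> kcongruent k M -> kcongruent k2 N ->
  (g = M *m N \/ g = N *m M) -> exists j, j != k1 /\ kcongruent j g.

Lemma dual_inj : injective dual.
Proof. by move=> a b e; rewrite -[a]dualK e dualK. Qed.

Lemma dual_neq a b : a != b -> dual a != dual b.
Proof. by apply: contra => /eqP /dual_inj ->. Qed.

Lemma CoreP_tr k1 k k2 : CoreP (dual k1) (dual k) (dual k2) -> CoreP k1 k k2.
Proof.
move=> H d1 d2 d3 g M N hg hM hN e.
have := H (dual_neq d1) (dual_neq d2) (dual_neq d3) g^T M^T N^T
  (kcong_tr hg) (kcong_tr hM) (kcong_tr hN).
case.
  by case: e => ->; rewrite trmx_mul; [right | left].
move=> j [hj /kcong_trE hgj]; exists (dual j); split => //.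
by apply: contra hj => /eqP <-; rewrite dualK.
Qed.

Lemma CoreA (k1 k k2 : R) : CoreP (Some k1) (Some k) (Some k2).
Proof.
move=> d1 d2 d3 g M N hg hM hN e; exists (Some k); split => //.
have d1' : k != k1 by apply: contra d1 => /eqP ->.
have d2' : k2 != k1 by apply: contra d2 => /eqP ->.
have d3' : k != k2 by apply: contra d3 => /eqP ->.
case: e => e.
- exact: (CoreRa d1' d2' d3' hg hM hN e).
- exact: (CoreRb d1' d2' d3' hg hM hN e).
Qed.

Lemma dual_some k : k != Some 0 -> exists r, dual k = Some r.
Proof.
case: k => [r|] h; last by exists 0.
have r0 : r != 0 by apply: contra h => /eqP ->.
by exists r^-1; rewrite /= (negbTE r0).
Qed.

Lemma CoreB (k1 k k2 : option R) : k1 != Some 0 -> k != Some 0 -> k2 != Some 0 ->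
  CoreP k1 k k2.
Proof.
move=> h1 h h2; apply: CoreP_tr.
have [r1 ->] := dual_some h1; have [r ->] := dual_some h; have [r2 ->] := dual_some h2.
exact: CoreA.
Qed.

Lemma CoreS r1 k k2 : CoreP (Some r1) k k2.
Proof.
move=> d1 d2 d3 g M N hg hM hN e.
case: k d1 d3 hM => [s|] d1 d3 hM; case: k2 d2 d3 hN => [s2|] d2 d3 hN.
- exact: (CoreA d1 d2 d3 hg hM hN e).
- have [s0|s0] := eqVneq s 0.
    subst s; have r0 : r1 != 0 by apply: contra d1 => /eqP ->.
    case: e => e.
    + by exists None; split => //; apply: (SP2 r0 hg hM hN e).
    + by exists None; split => //; apply: (SP1 r0 hg hM hN e).
  have [r0|r0] := eqVneq r1 0.
    subst r1; exists (Some s); split => //.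
    case: e => e; [exact: (SP4 s0 hg hN hM e) | exact: (SP3 s0 hg hN hM e)].
  apply: (CoreB _ _ _ d1 d2 d3 hg hM hN e) => //;
    by apply: contra; [move: r0 | move: s0] => + /eqP [] => /eqP.
- have [s0|s0] := eqVneq s2 0.
    subst s2; have r0 : r1 != 0 by apply: contra d2 => /eqP ->.
    case: e => e.
    + by exists None; split => //; apply: (SP1 r0 hg hN hM e).
    + by exists None; split => //; apply: (SP2 r0 hg hN hM e).
  have [r0|r0] := eqVneq r1 0.
    subst r1; exists (Some s2); split => //.
    case: e => e; [exact: (SP3 s0 hg hM hN e) | exact: (SP4 s0 hg hM hN e)].
  apply: (CoreB _ _ _ d1 d2 d3 hg hM hN e) => //;
    by apply: contra; [move: r0 | move: s0] => + /eqP [] => /eqP.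
- by rewrite eqxx in d3.
Qed.

Lemma Core k1 k k2 : CoreP k1 k k2.
Proof.
case: k1 => [r1|]; first exact: CoreS.
by apply: CoreP_tr; apply: CoreS.
Qed.

Lemma hatE (B : 'M[R]_4) : hatblock B = drsubmx (B : M4).
Proof. by apply/matrixP => i j; rewrite !mxE; congr (B _ _); apply: val_inj. Qed.

Lemma condE_blk (A : 'M[R]_4) : condE A ->
  ulsubmx (invmx A : M4) = ulsubmx (A : M4) /\ drsubmx (invmx A : M4) = (drsubmx (A : M4))^T.
Proof.
case=> h1 h2; split; last by rewrite -!hatE.
apply/matrixP => i j; rewrite (ord1 i) (ord1 j) !mxE.
have -> : lshift 3 (0 : 'I_1) = ord0 :> 'I_4 by apply: val_inj.
exact: h1.
Qed.

Lemma invmx_sq (A : M4) : A \in unitmx -> invmx (A *m A) = invmx A *m invmx A.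
Proof.
move=> u; have uAA : A *m A \in unitmx by rewrite unitmx_mul u.
have h : invmx A *m invmx A *m (A *m A) = 1%:M.
  by rewrite mulmxA -[invmx A *m invmx A *m A]mulmxA mulVmx // mulmx1 mulVmx.
by rewrite -[LHS]mul1mx -h -mulmxA mulmxV // mulmx1.
Qed.

Lemma P1 (A : M4) : A \in unitmx -> ulsubmx (invmx A) = ulsubmx A ->
  drsubmx (invmx A) = (drsubmx A)^T ->
  drsubmx (invmx A *m invmx A) = (drsubmx (A *m A))^T -> \det A ^+ 2 = 1.
Proof.
move=> uA hul hdr hsq.
have hAB := mulmxV uA; have hBA := mulVmx uA.
move: hAB hBA hsq; rewrite -[invmx A]submxK hul hdr.
move: (ursubmx (invmx A)) (dlsubmx (invmx A)) => x' y'.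
rewrite -[A]submxK !block_mxKul !block_mxKdr => hAB hBA hsq.
exact: P1b hAB hBA hsq.
Qed.

Lemma P2 (A : M4) : A \in unitmx -> ulsubmx (invmx A) = ulsubmx A ->
  drsubmx (invmx A) = (drsubmx A)^T -> \det A ^+ 2 = 1 ->
  exists k, kcongruent k A.
Proof.
move=> uA hul hdr hd.
have hAB := mulmxV uA; have hBA := mulVmx uA.
move: hAB hBA hd; rewrite -[invmx A]submxK hul hdr.
move: (ursubmx (invmx A)) (dlsubmx (invmx A)) => x' y'.
rewrite -[A]submxK !block_mxKul !block_mxKdr => hAB hBA hd.
exact: P2b hAB hBA hd.
Qed.

End S.

Unset Implicit Arguments. Set Strict Implicit.

From Stdlib Require Import Classical.

Theorem lemma2p3 (R : realType) :
  (* (1) *)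
  (forall A : 'M[R]_4, A \in unitmx -> condE A ->
     condE (A *m A) -> (\det A) ^+ 2 = 1)
  /\
  (* (2) *)
  (forall A : 'M[R]_4, A \in unitmx -> condE A -> (\det A) ^+ 2 = 1 ->
     (exists k : S1 R, kcongruent k A) /\
     ((exists! k : S1 R, kcongruent k A) \/ (forall k : S1 R, kcongruent k A)))
  /\
  (* (3) *)
  (forall (A1 A2 : 'M[R]_4) (k1 k2 : S1 R),
     A1 \in unitmx -> A2 \in unitmx ->
     kcongruent k1 A1 -> kcongruent k2 A2 ->
     (forall k : S1 R, kcongruent k A1 -> k = k1) ->
     ((exists k : S1 R, kcongruent k (A1 *m A2)) -> kcongruent k1 (A1 *m A2)) /\
     ((exists k : S1 R, kcongruent k (A2 *m A1)) -> kcongruent k1 (A2 *m A1))).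
Proof.
split; [|split].
- move=> A uA hE hE2.
  have [hul hdr] := condE_blk hE.
  have [_ hsq] := condE_blk hE2.
  apply: (P1 uA hul hdr).
  by rewrite -(invmx_sq (A := (A : 'M[R]_(1+3)))).
- move=> A uA hE hd.
  have [hul hdr] := condE_blk hE.
  have [k0 hk0] := P2 uA hul hdr hd.
  split; first by exists k0.
  case: (classic (exists k', kcongruent k' A /\ k' <> k0)).
    case=> k' [hk' ne]; right; apply: (TL (j := k') (l := k0)) => //.
    by apply/eqP.
  move=> hn; left; exists k0; split => // k' hk'.
  by apply: NNPP => ne; apply: hn; exists k'; split => // e; apply: ne; rewrite e.
- move=> A1 A2 k1 k2 u1 u2 h1 h2 huniq.
  have gen : forall (g M N : 'M[R]_4) k,
      (g = M *m N \/ g = N *m M) -> kcongruent k M -> kcongruent k2 N ->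
      kcongruent k1 g -> (forall k, kcongruent k g -> k = k1) ->
      (kcongruent k1 M \/ k = k1 \/ k2 = k1).
    move=> g M N k e hM hN hg hu.
    have [kk1|kk1] := eqVneq k k1; first by right; left.
    have [k21|k21] := eqVneq k2 k1; first by right; right.
    have [kk2|kk2] := eqVneq k k2.
      subst k2; exfalso.
      have : kcongruent k g.
        by case: e => ->; apply: kmul.
      by move/hu => /eqP; rewrite (negbTE kk1).
    have [j [hj hgj]] := Core kk1 k21 kk2 hg hM hN e.
    by move: (hu j hgj) => /eqP; rewrite (negbTE hj).
  split.
  + case=> k hk.
    have e : A1 = (A1 *m A2) *m invmx A2 by rewrite mulmxK.
    case: (gen A1 (A1 *m A2) (invmx A2) k (or_introl e) hk (kinv h2) h1 huniq).
      by [].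
    case=> [<- // | e21].
    by apply: kmul => //; rewrite -e21.
  + case=> k hk.
    have e : A1 = invmx A2 *m (A2 *m A1) by rewrite mulKmx.
    case: (gen A1 (A2 *m A1) (invmx A2) k (or_intror e) hk (kinv h2) h1 huniq).
      by [].
    case=> [<- // | e21].
    by apply: kmul => //; rewrite -e21.
Qed.
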